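(* Let $f:\mathbb{Z}^+\to \{-1,1\}$ be a function such that $|f([n])|\leq \frac{n}{\omega (n)}$ for all $n$, where $\omega$ is a function with $\omega(n)\to \infty$ as $n \to \infty$. Then, for every even $k\geq 2$, there are infinitely many $k$-blocks $B\subseteq \mathbb{Z}^+$ with $f(B)=0$.
   Context: $[n]=\{1,\dots,n\}$; for a finite set $Y$, $f(Y)=\sum_{y\in Y}f(y)$; a $k$-block is a set of $k$ consecutive integers. *)

(* Defs.v *)
From HB Require Import structures.
From mathcomp Require Import all_boot all_order all_algebra.
From mathcomp Require Import reals.
Set Implicit Arguments. Unset Strict Implicit. Unset Printing Implicit Defensive.
Import Order.TTheory GRing.Theory Num.Theory.

Definition prefix_sum (f : nat -> int) (n : nat) : int :=
  (\sum_(1 <= i < n.+1) f i)%R.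

Definition block_sum (f : nat -> int) (a k : nat) : int :=
  (\sum_(a <= i < a + k) f i)%R.

(* Main.v *)
Require Import Defs.
From HB Require Import structures.
From mathcomp Require Import all_boot all_order all_algebra.
From mathcomp Require Import reals zify.
From Stdlib Require Import Classical.
Import Order.TTheory GRing.Theory Num.Theory.
Local Open Scope ring_scope.
Lemma t1 (x y : int) : `|x - y| <= 2 -> (x - y <= 2)%R.
Proof. lia. Qed.
Lemma prefS f n : prefix_sum f n.+1 = prefix_sum f n + f n.+1.
Proof. by rewrite /prefix_sum big_nat_recr. Qed.
Lemma blockE f m k : block_sum f m.+1 k = prefix_sum f (m+k) - prefix_sum f m.
Proof.
rewrite /prefix_sum /block_sum (@big_cat_nat _ _ _ m.+1 1 (m+k).+1) //=.
  rewrite addSn. set A := \big[_/_]_(1 <= i < m.+1) _. set B := \big[_/_]_(m.+1 <= i < _) _. lia.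
by rewrite ltnS leq_addr.
Qed.
Lemma par f (hf : forall n : nat, (1 <= n)%N -> f n = 1 \/ f n = -1) n :
  exists t : int, prefix_sum f n = n%:Z - 2 * t.
Proof.
elim: n => [|n [t IH]]; first by exists 0; rewrite /prefix_sum big_geq.
rewrite prefS IH; case: (hf n.+1 erefl) => ->.
  by exists t; lia.
by exists (t + 1); lia.
Qed.

Lemma persist (g : nat -> int) m0 : (forall m, (m0 <= m)%N -> g m != 0) ->
  (forall m, exists u, g m = 2*u) -> (forall m, `|g m.+1 - g m| <= 2) ->
  0 < g m0 -> forall i, 2 <= g (m0+i)%N.
Proof.
move=> hnz hev hd h0; elim=> [|i IH].
  rewrite addn0; have [u hu] := hev m0; lia.
have := hnz (m0 + i.+1)%N (leq_addr _ _); have := hd (m0 + i)%N.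
rewrite addnS. have [u hu] := hev (m0+i)%N; have [v hv] := hev (m0+i).+1%N. lia.
Qed.

Lemma growth (S : nat -> int) m0 k : (forall m, (m0 <= m)%N -> S m + 2 <= S (m + k)%N) ->
  forall j, S m0 + 2 * j%:Z <= S (m0 + j * k)%N.
Proof.
move=> h; elim=> [|j IH]; first by rewrite mul0n addn0 mulr0 addr0.
have -> : (m0 + (j.+1 * k) = (m0 + j * k) + k)%N by rewrite mulSn addnCA addnC.
have := h (m0 + j * k)%N (leq_addr _ _). lia.
Qed.

Lemma final (S : nat -> int) m0 k N1 : (1 <= k)%N ->
  (forall n, (N1 <= n)%N -> k%:Z * S n <= n%:Z) ->
  (forall j, S m0 + 2 * j%:Z <= S (m0 + j * k)%N) -> False.
Proof.
move=> hk hb hg.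
set j := (m0 + k * `|S m0| + N1 + 1)%N.
have h1 := hg j. have h2 := hb (m0 + j * k)%N.
have hN : (N1 <= m0 + j * k)%N.
  apply: (leq_trans _ (leq_addl _ _)); rewrite /j.
  apply: (leq_trans _ (leq_pmulr _ hk)); lia.
have {h2} h2 := h2 hN.
have h3 : k%:Z * (S m0 + 2 * j%:Z) <= k%:Z * S (m0 + j * k)%N by rewrite ler_pM2l //; lia.
have h4 : (j <= j * k)%N by rewrite leq_pmulr.
have h5 : - (k%:Z * `|S m0|%N%:Z) <= k%:Z * S m0.
  rewrite -mulrN ler_pM2l; last by lia.
  lia.
move: h2 h3 h4 h5; rewrite /j; set a := S m0; set b := S _. nia.
Qed.
Theorem theorem2p8 (R : realType) (f : nat -> int) (omega : nat -> R)
  (hf : forall n : nat, (1 <= n)%N -> f n = 1 \/ f n = -1)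
  (homega : forall M : R, exists N : nat, forall n : nat, (N <= n)%N -> M <= omega n)
  (hbound : forall n : nat, (1 <= n)%N ->
     `|(prefix_sum f n)%:~R : R| <= n%:R / omega n) :
  forall k : nat, (2 <= k)%N -> ~~ odd k ->
  forall N : nat, exists a : nat, (N <= a)%N /\ (1 <= a)%N /\ block_sum f a k = 0.
Proof.
move=> k hk hodd N.
apply: NNPP => H.
set S := prefix_sum f.
have [N1 hN1] := homega k%:R.
have hb : forall n, (maxn N1 1 <= n)%N -> k%:Z * `|S n| <= n%:Z.
  move=> n hn.
  have hn1 : (1 <= n)%N by move: hn; rewrite geq_max => /andP[].
  have hn2 : (N1 <= n)%N by move: hn; rewrite geq_max => /andP[].
  have hw := hN1 n hn2.
  have hk0 : (0 : R) < k%:R by rewrite ltr0n; lia.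
  have hw0 : 0 < omega n by apply: lt_le_trans hw.
  have := hbound n hn1; rewrite ler_pdivlMr // => h.
  have h2 : `|(S n)%:~R : R| * k%:R <= n%:R.
    apply: le_trans h; apply: ler_wpM2l => //.
  have : ((k%:Z * `|S n|)%:~R : R) <= (n%:Z)%:~R.
    by rewrite intrM intr_norm mulrC.
  by rewrite ler_int.
have hk1 : (1 <= k)%N by lia.
set g := fun m => S (m + k)%N - S m.
have hnz : forall m, (N <= m)%N -> g m != 0.
  move=> m hm; apply/negP => /eqP hg; apply: H; exists m.+1; split; first lia.
  split => //; rewrite blockE; exact: hg.
have hev : forall m, exists u, g m = 2 * u.
  move=> m; have [t1 h1] := par _ hf (m + k)%N; have [t2 h2] := par _ hf m.
  have hk2 : (k = 2 * k./2)%N.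
    by rewrite -[k in LHS]odd_double_half (negbTE hodd) add0n -mul2n.
  exists (k./2%:Z - t1 + t2); rewrite /g /S h1 h2. lia.
have hd : forall m, `|g m.+1 - g m| <= 2.
  move=> m; rewrite /g /S addSn !prefS.
  case: (hf (m + k).+1 erefl) => ->; case: (hf m.+1 erefl) => ->; lia.
have hNz := hnz N (leqnn _).
have [hpos|hneg] : 0 < g N \/ 0 < - g N by lia.
- have hp := persist _ _ hnz hev hd hpos.
  apply: (final S N k (maxn N1 1) hk1).
    move=> n hn; have := hb n hn; lia.
  apply: growth => m hm; have := hp (m - N)%N; rewrite subnKC //; rewrite /g; lia.
- have hp := persist (fun m => - g m) N.
  have {hp} hp := hp (fun m hm => ltac:(rewrite oppr_eq0; exact: hnz m hm))
    (fun m => ltac:(have [u hu] := hev m; exists (- u); rewrite hu; lia))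
    (fun m => ltac:(have := hd m; lia)) hneg.
  apply: (final (fun n => - S n) N k (maxn N1 1) hk1).
    move=> n hn; have := hb n hn; lia.
  apply: (growth (fun n => - S n)) => m hm; have := hp (m - N)%N; rewrite subnKC //; rewrite /g; lia.
Qed.
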